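(* Let $f=(f_1,\dots,f_m):\mathbb{R}^n\times\mathbb{R}^m\to\mathbb{R}^m$ be continuous, $R\subset\mathbb{R}^n$ a rectangle, $I=\prod_{i=1}^mI_i$ with compact intervals $I_i$, and $\phi$ a permutation of $\{1,\dots,m\}$. Suppose there are continuous functions $h_i:R\times I_1\times\cdots\times I_{i-1}\to I_i$ ($i=1,\dots,m$) with the following property: for each $i$ and each $(x,y_1,\dots,y_{i-1})\in R\times I_1\times\cdots\times I_{i-1}$, the value $y_i=h_i(x,y_1,\dots,y_{i-1})$ is the unique $y_i\in I_i$ such that $f_{\phi(i)}(x,Y_1,\dots,Y_m)=0$, where $Y_k=y_k$ for $k\le i$ and $Y_k=h_k(x,Y_1,\dots,Y_{k-1})$ for $k=i+1,\dots,m$. Then for every $x\in R$ there is a unique $y\in I$ with $f(x,y)=0$, and the resulting function $g=(g_1,\dots,g_m):R\to I$ is continuous and given by $$g_1(x)=h_1(x),\quad g_2(x)=h_2(x,g_1(x)),\quad\dots,\quad g_m(x)=h_m(x,g_1(x),\dots,g_{m-1}(x)).$$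
   Context: A rectangle in $\mathbb{R}^n$ is a Cartesian product of $n$ compact intervals. (In the paper, such $h_i$ arise from Assumption 2: for each $i$, the map $y_i\mapsto\operatorname{sign}f_{\phi(i)}(x,Y_1,\dots,Y_m)$ has exactly one jump discontinuity on $I_i$, where $\operatorname{sign}(t)=1$ for $t\ge0$ and $-1$ otherwise.) *)

(* Defs.v *)
From HB Require Import structures.
From mathcomp Require Import all_boot all_order all_algebra.
From mathcomp Require Import all_classical all_reals all_analysis.
From mathcomp Require Import perm.
Set Implicit Arguments. Unset Strict Implicit. Unset Printing Implicit Defensive.
Import Order.TTheory GRing.Theory Num.Theory.
Import numFieldNormedType.Exports.
Local Open Scope classical_set_scope.
Local Open Scope ring_scope.

Definition box (R : realType) (k : nat) (a b : 'rV[R]_k) : set 'rV[R]_k :=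
  [set x | forall j : 'I_k, a 0 j <= x 0 j <= b 0 j].

Definition pre (R : realType) (m : nat) (i : 'I_m) (y : 'rV[R]_m) : 'rV[R]_i :=
  \row_(j < i) y 0 (widen_ord (ltnW (ltn_ord i)) j).

(* Main.v *)
Require Import Defs.
Set Implicit Arguments. Unset Strict Implicit. Unset Printing Implicit Defensive.
From HB Require Import structures.
From mathcomp Require Import all_boot all_order all_algebra.
From mathcomp Require Import all_classical all_reals all_analysis.
From mathcomp Require Import perm.
Import Order.TTheory GRing.Theory Num.Theory.
Import numFieldNormedType.Exports.
Local Open Scope classical_set_scope.
Local Open Scope ring_scope.

Lemma pre_mxE (R : realType) (m : nat) (i : 'I_m) (y : 'rV[R]_m) (j : 'I_i) :
  pre i y 0 j = y 0 (widen_ord (ltnW (ltn_ord i)) j).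
Proof. by rewrite /pre mxE. Qed.

Lemma pre_eq (R : realType) (m : nat) (i : 'I_m) (y z : 'rV[R]_m) :
  (forall j : 'I_m, (j < i)%N -> y 0 j = z 0 j) -> pre i y = pre i z.
Proof.
move=> H; apply/rowP => j; rewrite !pre_mxE; apply: H => /=; exact: ltn_ord.
Qed.

Definition Gstep (R : realType) (n m : nat)
  (h : forall i : 'I_m, 'rV[R]_n -> 'rV[R]_i -> R) (x : 'rV[R]_n) (k : nat)
  (v : 'rV[R]_m) : 'rV[R]_m :=
  match (insub k : option 'I_m) with
  | Some i => \row_j (if j == i then h i x (pre i v) else v 0 j)
  | None => v
  end.

Definition G (R : realType) (n m : nat)
  (h : forall i : 'I_m, 'rV[R]_n -> 'rV[R]_i -> R) (x : 'rV[R]_n) : nat -> 'rV[R]_m :=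
  fix G k := match k with 0 => 0 | k'.+1 => Gstep h x k' (G k') end.

Lemma G_S_ne (R : realType) (n m : nat) h (x : 'rV[R]_n) (k : nat) (j : 'I_m) :
  val j != k -> G h x k.+1 0 j = G h x k 0 j.
Proof.
move=> jk /=; rewrite /Gstep; case: insubP => [/= i _ ik|//].
rewrite !mxE; case: eqP => // ji; move: jk; by rewrite ji -ik eqxx.
Qed.

Lemma G_S_eq (R : realType) (n m : nat) h (x : 'rV[R]_n) (i : 'I_m) :
  G h x (val i).+1 0 i = h i x (pre i (G h x i)).
Proof.
rewrite /= /Gstep; case: insubP => [/= i' _ ii|]; last by rewrite ltn_ord.
have -> : i' = i by apply: val_inj.
by rewrite mxE eqxx.
Qed.

Lemma G_stable (R : realType) (n m : nat) h (x : 'rV[R]_n) (j : 'I_m) k k' :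
  (j < k)%N -> (k <= k')%N -> G h x k' 0 j = G h x k 0 j.
Proof.
move=> jk; elim: k' => [|k' IH]; first by rewrite leqn0 => /eqP ->.
rewrite leq_eqVlt => /orP[/eqP -> //|]; rewrite ltnS => kk'.
rewrite G_S_ne ?IH //; apply/negP => /eqP E; move: (leq_trans jk kk').
by rewrite E ltnn.
Qed.

Lemma G_fix (R : realType) (n m : nat) h (x : 'rV[R]_n) (i : 'I_m) :
  G h x m 0 i = h i x (pre i (G h x m)).
Proof.
rewrite (@G_stable _ _ _ _ _ _ (val i).+1) //; last exact: ltn_ord.
rewrite G_S_eq; congr h; apply: pre_eq => j ji.
rewrite (@G_stable _ _ _ _ _ j i m) //; exact: ltnW (ltn_ord i).
Qed.

Lemma fix_unique (R : realType) (n m : nat) h (x : 'rV[R]_n) (y z : 'rV[R]_m) :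
  (forall i : 'I_m, y 0 i = h i x (pre i y)) ->
  (forall i : 'I_m, z 0 i = h i x (pre i z)) -> y = z.
Proof.
move=> Hy Hz.
suff H : forall k (i : 'I_m), (val i < k)%N -> y 0 i = z 0 i.
  apply/rowP => i; exact: (H m.+1) (ltnW (ltn_ord _)).
elim=> [//|k IH] i; rewrite ltnS leq_eqVlt => /orP[/eqP E|]; last exact: IH.
rewrite Hy Hz; congr h; apply: pre_eq => j ji; apply: IH; by rewrite -E.
Qed.

Lemma cvg_within_comp {T U V : topologicalType} (A : set T) (B : set U)
  (P : T -> U) (H : U -> V) (x : T) :
  (forall y, A y -> B (P y)) -> P @ within A (nbhs x) --> P x ->
  H @ within B (nbhs (P x)) --> H (P x) ->
  (H \o P) @ within A (nbhs x) --> H (P x).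
Proof.
move=> AB cP cH; apply: (@cvg_trans _ (H @ within B (nbhs (P x)))) => //.
move=> W /= HW.
have {HW}: within B (nbhs (P x)) (H @^-1` W) by exact: HW.
rewrite {1}/within /= => /cP; rewrite !nbhs_simpl /=.
rewrite /within /=; apply: (@filterS _ (nbhs x)) => y + Ay; rewrite /preimage /=.
by move/(_ Ay); apply; apply: AB.
Qed.

Lemma cvg_row (R : realType) (k : nat) (T : Type) (F : set_system T)
  (FF : Filter F) (u : T -> 'rV[R]_k) (l : 'rV[R]_k) :
  (forall j, (fun t => u t 0 j) @ F --> l 0 j) -> u @ F --> l.
Proof.
move=> H; apply/cvg_mx_entourageP => E entE.
suff : \forall t \near F, forall i j, (l i j, u t i j) \in E by [].
apply: (@filter_forall _ _ (fun i t => forall j, (l i j, u t i j) \in E) F FF) => i.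
apply: (@filter_forall _ _ (fun j t => (l i j, u t i j) \in E) F FF) => j.
rewrite (ord1 i).
have /cvg_entourageP/(_ E entE) := H j.
by apply: (@filterS _ F) => t Et; apply/mem_set.
Qed.

Lemma pre_box (R : realType) (m : nat) (i : 'I_m) (c d y : 'rV[R]_m) :
  box c d y -> box (pre i c) (pre i d) (pre i y).
Proof. by move=> H j; rewrite !pre_mxE; apply: H. Qed.

From mathcomp Require Import zify.

Theorem lemma5p1 (R : realType) (n m : nat)
  (f : 'rV[R]_n -> 'rV[R]_m -> 'rV[R]_m)
  (a b : 'rV[R]_n) (c d : 'rV[R]_m) (phi : 'S_m)
  (h : forall i : 'I_m, 'rV[R]_n -> 'rV[R]_i -> R) :
  continuous (fun p : 'rV[R]_n * 'rV[R]_m => f p.1 p.2) ->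
  (forall j : 'I_n, a 0 j <= b 0 j) ->
  (forall j : 'I_m, c 0 j <= d 0 j) ->
  (* h_i : R x I_1 x ... x I_{i-1} -> I_i *)
  (forall (i : 'I_m) (x : 'rV[R]_n) (yp : 'rV[R]_i),
     box a b x -> box (pre i c) (pre i d) yp -> c 0 i <= h i x yp <= d 0 i) ->
  (* h_i is continuous on R x I_1 x ... x I_{i-1} *)
  (forall i : 'I_m,
     {within [set p : 'rV[R]_n * 'rV[R]_i | box a b p.1 /\ box (pre i c) (pre i d) p.2],
      continuous (fun p : 'rV[R]_n * 'rV[R]_i => h i p.1 p.2)}) ->
  (* uniqueness property of h_i *)
  (forall (i : 'I_m) (x : 'rV[R]_n) (yp : 'rV[R]_i),
     box a b x -> box (pre i c) (pre i d) yp ->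
     forall t : R, c 0 i <= t <= d 0 i ->
     forall Y : 'rV[R]_m,
       pre i Y = yp -> Y 0 i = t ->
       (forall k : 'I_m, (i < k)%N -> Y 0 k = h k x (pre k Y)) ->
       (f x Y 0 (phi i) = 0 <-> t = h i x yp)) ->
  exists g : 'rV[R]_n -> 'rV[R]_m,
    (forall x, box a b x ->
       [/\ box c d (g x), f x (g x) = 0 &
           forall y, box c d y -> f x y = 0 -> y = g x]) /\
    {within box a b, continuous g} /\
    (forall x, box a b x -> forall i : 'I_m, g x 0 i = h i x (pre i (g x))).
Proof.
move=> _ _ _ hbound hcont huniq.
pose g x := G h x m.
have hfix x (i : 'I_m) : g x 0 i = h i x (pre i (g x)) by exact: G_fix.
have hbox x : box a b x -> box c d (g x).
  move=> Ax.
  suff H : forall k (i : 'I_m), (val i < k)%N -> c 0 i <= g x 0 i <= d 0 i.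
    move=> i; exact: (H m) (ltn_ord i).
  elim=> [//|k IH] i ik; rewrite hfix; apply: hbound => // j.
  rewrite !pre_mxE; apply: IH => /=; exact: leq_trans (ltn_ord j) ik.
exists g; split; [|split].
- move=> x Ax; split; first exact: hbox.
  + apply/rowP => k; rewrite [RHS]mxE.
    have := huniq ((phi^-1)%g k) x _ Ax (@pre_box _ _ _ c d _ (hbox x Ax))
      (g x 0 ((phi^-1)%g k)) (hbox x Ax ((phi^-1)%g k)) (g x) erefl erefl (fun k _ => hfix x k).
    by case=> _ /(_ (hfix _ _)); rewrite permKV.
  + move=> y yb fy.
    suff Hy : forall i : 'I_m, y 0 i = h i x (pre i y) by apply: fix_unique.
    suff H : forall N (i : 'I_m), (m - i <= N)%N -> y 0 i = h i x (pre i y).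
      move=> i; apply: (H m); exact: leq_subr.
    elim=> [|N IH] i iN; first by move: iN; rewrite leqn0 subn_eq0 leqNgt ltn_ord.
    apply: (proj1 (huniq i x (pre i y) Ax (@pre_box _ _ i _ _ _ yb) (y 0 i) (yb i) y erefl erefl _)).
      move=> k ik; apply: IH; move: (ltn_ord k) ik iN; rewrite /=; set u := nat_of_ord i; set v := nat_of_ord k; lia.
    by rewrite fy mxE.
- apply/subspace_continuousP => x Ax; apply: cvg_row => j.
  move: j x Ax.
  suff H : forall k (j : 'I_m), (val j < k)%N -> forall x, box a b x ->
      (fun t => g t 0 j) @ within (box a b) (nbhs x) --> g x 0 j.
    move=> j; exact: (H m) (ltn_ord j).
  elim=> [//|k IH] j jk x Ax.
  pose B := [set p : 'rV[R]_n * 'rV[R]_j | box a b p.1 /\ box (pre j c) (pre j d) p.2].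
  pose P := fun t => (t, pre j (g t)).
  pose Hj := fun p : 'rV[R]_n * 'rV[R]_j => h j p.1 p.2.
  have PB : forall t, box a b t -> B (P t).
    by move=> t At; split => //; apply: pre_box; apply: hbox.
  have cP : P @ within (box a b) (nbhs x) --> P x.
    have c1 : (fun t => t) @ within (box a b) (nbhs x) --> x by exact: cvg_within.
    suff c2 : (fun t => pre j (g t)) @ within (box a b) (nbhs x) --> pre j (g x).
      exact: (cvg_pair c1 c2).
    apply: cvg_row => l.
    have -> : (fun t => pre j (g t) 0 l) = (fun t => g t 0 (widen_ord (ltnW (ltn_ord j)) l)).
      by apply/funext => t; rewrite pre_mxE.
    rewrite pre_mxE; apply: IH => //=; exact: leq_trans (ltn_ord l) jk.
  have cH : Hj @ within B (nbhs (P x)) --> Hj (P x).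
    by have /subspace_continuousP := hcont j; apply; apply: PB.
  have := cvg_within_comp PB cP cH.
  rewrite /Hj /P /= -hfix; apply: cvg_trans.
  apply: fmap_within_eq => t _ /=; by rewrite -hfix.
- by move=> x _ i; apply: hfix.
Qed.
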